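(* Define rooted trees $(S_\alpha,r_\alpha)$ for all ordinals $\alpha\ge 1$ by transfinite recursion: $S_1$ is a single vertex $r_1$; for $\alpha>1$, $S_\alpha$ is obtained from pairwise disjoint copies of the rooted trees $(S_i,r_i)$, $1\le i<\alpha$, by adding a new vertex $r_\alpha$ (the root of $S_\alpha$) joined by an edge to each $r_i$, $1\le i<\alpha$. Then for every ordinal $\alpha$ (including $\alpha=0$), the tree $S_{\alpha+1}$ is cop-win and $\eta(S_{\alpha+1})=\alpha$.
   Context: All graphs are simple and undirected, possibly infinite. For a vertex $v$ of a graph $G$, $N[v]$ denotes its closed neighbourhood. Define binary relations $\leq_\alpha$ on $V(G)$, for every ordinal $\alpha$, by transfinite recursion: $u\leq_0 v$ iff $u=v$; for $\alpha>0$, $u\leq_\alpha v$ iff for every $x\in N[u]$ there exist $y\in N[v]$ and an ordinal $\beta<\alpha$ with $x\leq_\beta y$. For $v\in V(G)$, $\eta(v)$ denotes the least ordinal $\alpha$ such that $u\leq_\alpha v$ for all $u\in V(G)$ (when such $\alpha$ exists), and $\eta(G)=\min_{v\in V(G)}\eta(v)$. A graph is cop-win if in the game of Cops and Robbers a single cop has a strategy guaranteeing capture of the robber (a tree is cop-win iff it contains no ray). *)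

(* Defs.v *)
From Stdlib Require Import List.
Import ListNotations.


Record graph := Graph {
  vtx :> Type;
  adj : vtx -> vtx -> Prop;
  adj_sym : forall x y, adj x y -> adj y x;
  adj_irrefl : forall x, ~ adj x x
}.

Definition cnbh (G : graph) (v x : G) : Prop := x = v \/ adj G v x.

(* Ordinals are represented as elements of a well-ordered type
   (W, lt): lt is well-founded, transitive and trichotomous.  The ordinal
   of w : W is the order type of {x | lt x w}. *)
Definition well_order {W : Type} (lt : W -> W -> Prop) : Prop :=
  well_founded lt /\
  (forall x y z, lt x y -> lt y z -> lt x z) /\
  (forall x y, lt x y \/ x = y \/ lt y x).

Definition is_zero {W : Type} (lt : W -> W -> Prop) (w : W) : Prop :=
  forall z, ~ lt z w.

(* leo lt G b u v  means  u <=_b v.  This inductive predicate is the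
   (unique) solution of the transfinite recursion:
     u <=_0 v  iff u = v;
     for b > 0: u <=_b v iff for all x in N[u] there are y in N[v] and
                c < b with x <=_c y. *)
Inductive leo {W : Type} (lt : W -> W -> Prop) (G : graph) : W -> G -> G -> Prop :=
| leo_zero : forall b u, is_zero lt b -> leo lt G b u u
| leo_succ : forall b u v, ~ is_zero lt b ->
    (forall x, cnbh G u x ->
       exists y, cnbh G v y /\ exists c, lt c b /\ leo lt G c x y) ->
    leo lt G b u v.

Definition eta_vtx {W : Type} (lt : W -> W -> Prop) (G : graph) (v : G) (b : W) : Prop :=
  (forall u, leo lt G b u v) /\
  (forall c, lt c b -> ~ (forall u, leo lt G c u v)).

Definition eta_graph {W : Type} (lt : W -> W -> Prop) (G : graph) (b : W) : Prop :=
  (exists v, eta_vtx lt G v b) /\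
  (forall v c, eta_vtx lt G v c -> ~ lt c b).

Definition lazy_walk (G : graph) (r : nat -> G) : Prop :=
  forall n, cnbh G (r n) (r (S n)).

(* A cop strategy: a starting vertex c0 and a move function depending on
   the whole history r_0, ..., r_n of robber positions. *)
Definition cop_pos (G : graph) (c0 : G) (f : list G -> G) (r : nat -> G) (n : nat) : G :=
  match n with
  | O => c0
  | S m => f (map r (seq 0 (S m)))
  end.

(* Round n: cop at c_n, robber at r_n; cop moves to c_{n+1} in N[c_n]
   (capture if c_{n+1} = r_n), then robber moves to r_{n+1} in N[r_n]
   (capture if r_{n+1} = c_{n+1}).  The robber chooses r_0 after seeing c_0
   and may react to everything; since the cop strategy is deterministic,
   quantifying over all robber walks covers all robber strategies. *)
Definition cop_win (G : graph) : Prop :=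
  exists (c0 : G) (f : list G -> G),
    forall r : nat -> G, lazy_walk G r ->
      (forall n, cnbh G (cop_pos G c0 f r n) (cop_pos G c0 f r (S n))) /\
      (exists n, cop_pos G c0 f r n = r n \/ cop_pos G c0 f r (S n) = r n).

(* Unrolling the recursive disjoint-union construction: a vertex of
   S_beta (beta >= 1) is a finite strictly decreasing sequence
   i_1 > i_2 > ... > i_k of ordinals with i_1 < beta and i_k >= 1;
   the root r_beta is the empty sequence, r_i (i < beta) is [i], and the
   vertices [i; ...] form the copy of S_i.
   For S_{alpha+1} the condition i_1 < alpha+1 reads i_1 <= alpha. *)
Fixpoint decr {W : Type} (lt : W -> W -> Prop) (l : list W) : Prop :=
  match l with
  | [] => True
  | x :: l' => match l' with
               | [] => True
               | y :: _ => lt y x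
               end /\ decr lt l'
  end.

Definition S_vertex {W : Type} (lt : W -> W -> Prop) (alpha : W) (l : list W) : Prop :=
  decr lt l /\
  (forall w, In w l -> ~ is_zero lt w) /\
  (forall w, In w l -> lt w alpha \/ w = alpha).

Definition S_type {W : Type} (lt : W -> W -> Prop) (alpha : W) : Type :=
  { l : list W | S_vertex lt alpha l }.

Definition S_adj {W : Type} (lt : W -> W -> Prop) (alpha : W)
  (u v : S_type lt alpha) : Prop :=
  (exists w, proj1_sig v = proj1_sig u ++ [w]) \/
  (exists w, proj1_sig u = proj1_sig v ++ [w]).

Lemma S_adj_sym {W : Type} (lt : W -> W -> Prop) (alpha : W) :
  forall u v, S_adj lt alpha u v -> S_adj lt alpha v u.
Proof. intros u v [H|H]; [right|left]; exact H. Qed.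

Lemma S_adj_irrefl {W : Type} (lt : W -> W -> Prop) (alpha : W) :
  forall u, ~ S_adj lt alpha u u.
Proof.
  intros u [[w H]|[w H]];
  apply (f_equal (@length W)) in H; rewrite length_app in H; simpl in H;
  rewrite PeanoNat.Nat.add_1_r in H; exact (PeanoNat.Nat.neq_succ_diag_l _ (eq_sym H)).
Qed.

Definition S_succ {W : Type} (lt : W -> W -> Prop) (alpha : W) : graph :=
  @Graph (S_type lt alpha) (S_adj lt alpha) (@S_adj_sym W lt alpha)
         (@S_adj_irrefl W lt alpha).

(* Main.v *)
Require Import Defs.
From Stdlib Require Import List Classical ClassicalEpsilon ProofIrrelevance PeanoNat.
Import ListNotations.

Lemma sig_ext {W} {lt : W -> W -> Prop} {alpha : W} (u v : S_type lt alpha) :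
  proj1_sig u = proj1_sig v -> u = v.
Proof. destruct u, v; simpl; intros ->. f_equal. apply proof_irrelevance. Qed.

Lemma lt_irrefl {W} (lt : W -> W -> Prop) : well_founded lt -> forall x, ~ lt x x.
Proof. intros wf x. induction (wf x) as [x _ IH]. intro H. exact (IH x H H). Qed.

Lemma zero_below {W} (lt : W -> W -> Prop) : well_order lt ->
  forall w, exists z, is_zero lt z /\ (z = w \/ lt z w).
Proof.
  intros [wf [tr _]] w. induction (wf w) as [w _ IH].
  destruct (classic (is_zero lt w)) as [Hz|Hz].
  - exists w; auto.
  - apply not_all_not_ex in Hz. destruct Hz as [z Hz].
    destruct (IH z Hz) as [z' [Hz' [Heq|Hl]]]; exists z'; split; subst; eauto.
Qed.

Lemma nonzero_below {W} (lt : W -> W -> Prop) : well_order lt ->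
  forall w, ~ is_zero lt w -> exists z, is_zero lt z /\ lt z w.
Proof.
  intros Hwo w Hw. pose proof Hwo as [wf [tr _]].
  apply not_all_not_ex in Hw. destruct Hw as [z0 Hz0].
  destruct (zero_below lt Hwo z0) as [z [Hz [Heq|Hl]]]; exists z; split; subst; eauto.
Qed.

Lemma leo_refl {W} (lt : W -> W -> Prop) (G : graph) : well_order lt ->
  forall b (u : G), leo lt G b u u.
Proof.
  intros Hwo b u. destruct (classic (is_zero lt b)) as [Hz|Hz].
  - apply leo_zero; auto.
  - apply leo_succ; auto. intros x Hx. exists x. split; [exact Hx|].
    destruct (nonzero_below lt Hwo b Hz) as [z [Hz0 Hzb]].
    exists z. split; auto. apply leo_zero; auto.
Qed.

Lemma leo_mono {W} (lt : W -> W -> Prop) (G : graph) : well_order lt ->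
  forall b b' (u v : G), leo lt G b u v -> lt b b' -> leo lt G b' u v.
Proof.
  intros Hwo b b' u v H Hbb. pose proof Hwo as [wf [tr _]].
  destruct H as [b u Hz|b u v Hnz Hs].
  - apply leo_refl; auto.
  - apply leo_succ.
    + intro Hz. exact (Hz b Hbb).
    + intros x Hx. destruct (Hs x Hx) as [y [Hy [c [Hc Hl]]]].
      exists y. split; auto. exists c. split; eauto.
Qed.

Lemma decr_app_l {W} (lt : W->W->Prop) l1 l2 : decr lt (l1 ++ l2) -> decr lt l1.
Proof.
  induction l1 as [|a l1 IH]; simpl; auto.
  intros [H1 H2]. split; [|auto].
  destruct l1 as [|b l1']; simpl in *; auto.
Qed.

Lemma decr_mid {W} (lt : W->W->Prop) v j k t : decr lt (v ++ j :: k :: t) -> lt k j.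
Proof.
  induction v; simpl; [intros [H _]; exact H | intros [_ H]; auto].
Qed.

Lemma decr_snoc2 {W} (lt : W->W->Prop) l k c :
  decr lt (l ++ [k]) -> lt c k -> decr lt ((l ++ [k]) ++ [c]).
Proof.
  rewrite <- app_assoc. simpl.
  induction l as [|a l IH]; simpl.
  - intros _ H. repeat split; auto.
  - intros [H1 H2] Hc. split; [|auto]. destruct l; simpl in *; auto.
Qed.

Lemma decr_last2 {W} (lt : W->W->Prop) l x y : decr lt (l ++ [x; y]) -> lt y x.
Proof.
  induction l; simpl; [intros [H _]; exact H | intros [_ H]; auto].
Qed.

Lemma prefix_vertex {W} (lt : W->W->Prop) alpha l1 l2 :
  S_vertex lt alpha (l1 ++ l2) -> S_vertex lt alpha l1.
Proof.
  intros [Hd [Hn Hl]]. split; [eapply decr_app_l; eauto|].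
  split; intros w Hw; [apply Hn|apply Hl]; apply in_or_app; auto.
Qed.

Lemma nil_or_snoc {A} (l : list A) : l = [] \/ exists l' a, l = l' ++ [a].
Proof. induction l using rev_ind; [left|right]; eauto. Qed.

Lemma no_desc {W} (lt : W->W->Prop) : well_founded lt ->
  forall a : nat -> W, (forall n, lt (a (S n)) (a n)) -> False.
Proof.
  intros wf a H.
  assert (H0 : forall x n, a n = x -> False).
  { intro x. induction (wf x) as [x _ IH]. intros n Hn.
    apply (IH (a (S n)) ltac:(rewrite <- Hn; apply H) (S n)); reflexivity. }
  exact (H0 (a 0) 0 eq_refl).
Qed.

Lemma upper {W} (lt : W -> W -> Prop) (alpha : W) (Hwo : well_order lt) :
  forall j (v u : S_type lt alpha) t, proj1_sig u = proj1_sig v ++ j :: t ->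
    leo lt (S_succ lt alpha) j u v.
Proof.
  pose proof Hwo as [wf [tr tri]].
  intro j. induction (wf j) as [j _ IH]. intros v u t Hu.
  assert (Hj : ~ is_zero lt j).
  { destruct u as [lu [Hd [Hnz Hle]]]. simpl in Hu. apply Hnz. rewrite Hu.
    apply in_or_app; right; left; reflexivity. }
  destruct (nonzero_below lt Hwo j Hj) as [z [Hz Hzj]].
  assert (H : forall (x : S_type lt alpha) s, proj1_sig x = proj1_sig v ++ j :: s ->
     exists y, cnbh (S_succ lt alpha) v y /\
       exists c, lt c j /\ leo lt (S_succ lt alpha) c x y).
  { intros x s Hx. destruct s as [|k s].
    - exists x. split. { right. left. exists j. exact Hx. }
      exists z. split; auto. apply leo_zero; auto.
    - assert (Hyv : S_vertex lt alpha (proj1_sig v ++ [j])).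
      { apply (prefix_vertex _ _ (proj1_sig v ++ [j]) (k :: s)).
        rewrite <- app_assoc. simpl. rewrite <- Hx. exact (proj2_sig x). }
      exists (exist _ _ Hyv). split. { right; left; exists j; reflexivity. }
      exists k. split.
      + pose proof (proj1 (proj2_sig x)) as Hd. rewrite Hx in Hd. exact (decr_mid _ _ _ _ _ Hd).
      + apply (IH k) with (t := s).
        * pose proof (proj1 (proj2_sig x)) as Hd. rewrite Hx in Hd. exact (decr_mid _ _ _ _ _ Hd).
        * simpl. rewrite <- app_assoc. exact Hx. }
  apply leo_succ; auto. intros x [Hx|[[w Hw]|[w Hw]]].
  - subst x. exact (H u t Hu).
  - apply (H x (t ++ [w])). rewrite Hw, Hu, <- app_assoc. reflexivity.
  - destruct (nil_or_snoc t) as [->|[t0 [a ->]]].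
    + rewrite Hu in Hw. apply app_inj_tail in Hw. destruct Hw as [Hw _].
      apply sig_ext in Hw. subst x. exists v. split; [left; reflexivity|].
      exists z. split; auto. apply leo_zero; auto.
    + apply (H x t0). rewrite Hu in Hw.
      replace (proj1_sig v ++ j :: t0 ++ [a]) with ((proj1_sig v ++ j :: t0) ++ [a]) in Hw
        by (rewrite <- app_assoc; reflexivity).
      apply app_inj_tail in Hw. destruct Hw as [Hw _]. symmetry; exact Hw.
Qed.

Lemma lower {W} (lt : W -> W -> Prop) (alpha : W) (Hwo : well_order lt) :
  forall k (x y : S_type lt alpha) p, proj1_sig x = p ++ [k] ->
  (~ exists s, proj1_sig y = proj1_sig x ++ s) ->
  forall c, lt c k -> ~ leo lt (S_succ lt alpha) c x y.
Proof.
  pose proof Hwo as [wf [tr tri]].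
  intro k. induction (wf k) as [k _ IH]. intros x y p Hx Hny c Hck Hl.
  inversion Hl as [b u Hz Hb Hu Hv|b u v Hnz Hstep Hb Hu Hv]; subst.
  - apply Hny. exists []. rewrite app_nil_r. reflexivity.
  - assert (Hx' : S_vertex lt alpha (proj1_sig x ++ [c])).
    { destruct x as [lx [Hd [Hn Hle]]]. simpl in *. subst lx.
      assert (Hk : lt k alpha \/ k = alpha) by (apply Hle; apply in_or_app; right; left; auto).
      split; [apply decr_snoc2; auto|]. split; intros w Hw; apply in_app_or in Hw;
      destruct Hw as [Hw|[Hw|[]]]; auto; subst w; auto.
      left. destruct Hk as [Hk|Hk]; [eauto|subst; auto]. }
    destruct (Hstep (exist _ _ Hx')) as [y' [Hy' [c' [Hc' Hl']]]].
    { right; left; exists c; reflexivity. }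
    apply (IH c Hck (exist _ _ Hx') y' (proj1_sig x) eq_refl) with (c := c'); auto.
    intros [s Hs]. simpl in Hs. apply Hny.
    destruct Hy' as [->|[[w Hw]|[w Hw]]].
    + exists (c :: s). rewrite Hs, <- app_assoc. reflexivity.
    + rewrite Hs in Hw. destruct (nil_or_snoc s) as [->|[s0 [a ->]]].
      * rewrite app_nil_r in Hw. apply app_inj_tail in Hw. exists []. rewrite app_nil_r. symmetry; apply Hw.
      * rewrite app_assoc in Hw. apply app_inj_tail in Hw. exists (c :: s0).
        destruct Hw as [Hw _]. rewrite <- Hw, <- app_assoc. reflexivity.
    + exists (c :: s ++ [w]). rewrite Hw, Hs, <- !app_assoc. reflexivity.
Qed.

Definition rootv {W} {lt : W -> W -> Prop} {alpha : W} : S_type lt alpha.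
Proof. exists []. split; [exact I|]. split; intros w []. Defined.

Lemma L3 {W} (lt : W -> W -> Prop) (alpha : W) (Hwo : well_order lt) :
  forall (v : S_type lt alpha) c, lt c alpha -> ~ forall u, leo lt (S_succ lt alpha) c u v.
Proof.
  pose proof Hwo as [wf [tr tri]].
  intros v c Hc H.
  assert (Ha : ~ is_zero lt alpha) by (intro Hz; exact (Hz c Hc)).
  assert (Hva : S_vertex lt alpha [alpha]).
  { split; [exact (conj I I)|]. split; intros w [<-|[]]; auto. }
  destruct (classic (exists s, proj1_sig v = [alpha] ++ s)) as [[s Hs]|Hn].
  - pose proof (H rootv) as Hl.
    inversion Hl as [b u Hz Hb Hu Hv|b u v0 Hnz Hstep Hb Hu Hv]; subst.
    + simpl in Hs. discriminate.
    + assert (Hvc : S_vertex lt alpha [c]).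
      { split; [exact (conj I I)|]. split; intros w [<-|[]]; auto. }
      destruct (Hstep (exist _ _ Hvc)) as [y' [Hy' [c' [Hc' Hl']]]].
      { right; left; exists c; reflexivity. }
      apply (lower lt alpha Hwo c (exist _ _ Hvc) y' [] eq_refl) with (c := c'); auto.
      intros [s' Hs']. simpl in Hs'.
      apply (lt_irrefl lt wf c). enough (c = alpha) by (subst; auto).
      destruct Hy' as [->|[[w Hw]|[w Hw]]].
      * rewrite Hs in Hs'. simpl in Hs'. injection Hs'; auto.
      * rewrite Hs' in Hw. rewrite Hs in Hw. simpl in Hw. injection Hw; auto.
      * rewrite Hs' in Hw. rewrite Hs in Hw. simpl in Hw. injection Hw; auto.
  - apply (lower lt alpha Hwo alpha (exist _ _ Hva) v [] eq_refl Hn c Hc (H _)).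
Qed.

Definition Pstep {W} {lt : W -> W -> Prop} {alpha : W} (c r y : S_type lt alpha) : Prop :=
  (exists w s, proj1_sig r = proj1_sig c ++ w :: s /\ proj1_sig y = proj1_sig c ++ [w]) \/
  ((~ exists w s, proj1_sig r = proj1_sig c ++ w :: s) /\ y = c).

Definition cstep {W} {lt : W -> W -> Prop} {alpha : W} (c r : S_type lt alpha) : S_type lt alpha :=
  epsilon (inhabits c) (Pstep c r).

Lemma cstep_spec {W} {lt : W -> W -> Prop} {alpha : W} (c r : S_type lt alpha) :
  Pstep c r (cstep c r).
Proof.
  unfold cstep. apply epsilon_spec.
  destruct (classic (exists w s, proj1_sig r = proj1_sig c ++ w :: s)) as [[w [s Hs]]|Hn].
  - assert (Hv : S_vertex lt alpha (proj1_sig c ++ [w])).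
    { apply (prefix_vertex _ _ _ s). rewrite <- app_assoc. simpl. rewrite <- Hs. exact (proj2_sig r). }
    exists (exist _ _ Hv). left. exists w, s. split; auto.
  - exists c. right; auto.
Qed.

Lemma cstep_adj {W} {lt : W -> W -> Prop} {alpha : W} (c r : S_type lt alpha) :
  cnbh (S_succ lt alpha) c (cstep c r).
Proof.
  destruct (cstep_spec c r) as [[w [s [_ H]]]|[_ H]].
  - right; left; exists w; exact H.
  - left; exact H.
Qed.

Lemma cop_succ {W} {lt : W -> W -> Prop} {alpha : W} (r : nat -> S_succ lt alpha) n :
  cop_pos (S_succ lt alpha) rootv (fun h => fold_left cstep h rootv) r (S n) =
  cstep (cop_pos (S_succ lt alpha) rootv (fun h => fold_left cstep h rootv) r n) (r n).
Proof.
  destruct n as [|m]; [reflexivity|].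
  unfold cop_pos. change (seq 0 (S (S m))) with (seq 0 (S (S m))). rewrite (seq_S (S m) 0), map_app, fold_left_app. reflexivity.
Qed.

Lemma copwin {W} (lt : W -> W -> Prop) (alpha : W) (Hwo : well_order lt) :
  cop_win (S_succ lt alpha).
Proof.
  pose proof Hwo as [wf [tr tri]].
  exists rootv, (fun h => fold_left cstep h rootv). intros r Hr.
  set (c := cop_pos (S_succ lt alpha) rootv (fun h => fold_left cstep h rootv) r).
  assert (Hc : forall n, c (S n) = cstep (c n) (r n)) by (intro n; apply cop_succ).
  split.
  - intro n. fold c. rewrite Hc. apply cstep_adj.
  - apply NNPP. intro Hno. fold c in Hno.
    assert (Hne1 : forall n, c n <> r n) by (intros n E; apply Hno; exists n; auto).
    assert (Hne2 : forall n, c (S n) <> r n) by (intros n E; apply Hno; exists n; auto).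
    assert (Hgrow : forall n, (exists w s, proj1_sig (r n) = proj1_sig (c n) ++ w :: s) ->
               exists w, proj1_sig (c (S n)) = proj1_sig (c n) ++ [w] /\
                 exists s, proj1_sig (r n) = proj1_sig (c (S n)) ++ s).
    { intros n Hex. rewrite Hc. destruct (cstep_spec (c n) (r n)) as [[w [s [Hs H]]]|[Hn' _]].
      - exists w. split; auto. exists s. rewrite H, Hs, <- app_assoc. reflexivity.
      - contradiction. }
    assert (Hinv : forall n, exists s, proj1_sig (r n) = proj1_sig (c n) ++ s).
    { induction n as [|n [s Hs]].
      - exists (proj1_sig (r 0)). reflexivity.
      - destruct s as [|w s].
        { exfalso. apply (Hne1 n). apply sig_ext. rewrite Hs, app_nil_r. reflexivity. }
        destruct (Hgrow n (ex_intro _ w (ex_intro _ s Hs))) as [w' [Hw' [s' Hs']]].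
        destruct (Hr n) as [E|[[w2 E]|[w2 E]]].
        + exists s'. rewrite E. exact Hs'.
        + exists (s' ++ [w2]). rewrite E, Hs', app_assoc. reflexivity.
        + rewrite Hs' in E. destruct (nil_or_snoc s') as [->|[s1 [a ->]]].
          * exfalso. apply (Hne2 n). apply sig_ext. rewrite Hs', app_nil_r. reflexivity.
          * rewrite app_assoc in E. apply app_inj_tail in E. destruct E as [E _].
            exists s1. symmetry. exact E. }
    assert (Hg : forall n, exists w, proj1_sig (c (S n)) = proj1_sig (c n) ++ [w]).
    { intro n. destruct (Hinv n) as [[|w s] Hs].
      - exfalso. apply (Hne1 n). apply sig_ext. rewrite Hs, app_nil_r. reflexivity.
      - destruct (Hgrow n (ex_intro _ w (ex_intro _ s Hs))) as [w' [Hw' _]]. eauto. }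
    assert (Hlen : forall n, length (proj1_sig (c n)) = n).
    { induction n as [|n IH]; [reflexivity|].
      destruct (Hg n) as [w Hw]. rewrite Hw, length_app, IH. simpl. apply Nat.add_1_r. }
    set (a := fun n => nth n (proj1_sig (c (S n))) alpha).
    assert (Ha : forall n, proj1_sig (c (S n)) = proj1_sig (c n) ++ [a n]).
    { intro n. destruct (Hg n) as [w Hw]. unfold a. rewrite Hw.
      rewrite app_nth2 by (rewrite Hlen; auto). rewrite Hlen, Nat.sub_diag. reflexivity. }
    apply (no_desc lt wf a). intro n.
    pose proof (proj1 (proj2_sig (c (S (S n))))) as Hd.
    rewrite Ha, Ha, <- app_assoc in Hd. simpl in Hd.
    exact (decr_last2 _ _ _ _ Hd).
Qed.

Theorem lemma3p4 (W : Type) (lt : W -> W -> Prop) (alpha : W) :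
  well_order lt ->
  cop_win (S_succ lt alpha) /\ eta_graph lt (S_succ lt alpha) alpha.
Proof.
  intro Hwo. pose proof Hwo as [wf [tr tri]].
  split; [apply copwin; auto|].
  assert (Hr : eta_vtx lt (S_succ lt alpha) rootv alpha).
  { split.
    - intro u. destruct (proj1_sig u) as [|j t] eqn:E.
      + assert (Eu : u = rootv) by (apply sig_ext; exact E).
        subst u. apply leo_refl; auto.
      + assert (Hj : lt j alpha \/ j = alpha)
          by (apply (proj2 (proj2 (proj2_sig u))); rewrite E; left; auto).
        pose proof (upper lt alpha Hwo j rootv u t E) as H.
        destruct Hj as [Hj| ->]; [eapply leo_mono; eauto|exact H].
    - intros c Hc. apply (L3 lt alpha Hwo rootv c Hc). }
  split; [exists rootv; exact Hr|].
  intros v c [H _] Hc. exact (L3 lt alpha Hwo v c Hc H).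
Qed.
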